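(* Let $(\alpha_0,\beta_0)\in\Delta_K$, $(\alpha_n,\beta_n)=T^n(\alpha_0,\beta_0)$, $\varepsilon_n=\varepsilon(\alpha_n,\beta_n)$. Let $\mathcal U=\sum_{i=0}^2(\bar{\bar e}_i,i^* )$ and $\mathcal U'=\sum_{i=0}^2(\bar{\bar 0},i^* )$, and for $n\ge0$ set $\gamma_n=\Theta_{\varepsilon_0}\cdots\Theta_{\varepsilon_{n-2}}\Theta_{\varepsilon_{n-1}}(\mathcal U)$ (with $\mathcal U$ viewed as a patch of $\mathscr S(\bar{\bar\nu}(\alpha_n,\beta_n))$) and $\gamma'_n=\Theta_{\varepsilon_0}\cdots\Theta_{\varepsilon_{n-1}}(\mathcal U')$ (with $\mathcal U'$ viewed as a patch of $\mathscr S'(\bar{\bar\nu}(\alpha_n,\beta_n))$). Then, identifying patches with their sets of unit squares: (1) $\gamma_n\setminus\gamma'_n=\mathcal U$ and $\gamma'_n\setminus\gamma_n=\mathcal U'$; (2) $\gamma_n\prec\gamma_{n+1}$ for all $n$; (3) $\bigcup_{n\ge0}\gamma_n\subset\mathscr S(\bar{\bar\nu}(\alpha_0,\beta_0))$.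
   Context: Let $K\subset\mathbb{R}$ be a real cubic number field, $N=N_{K/\mathbb{Q}}$ its norm. Fix $r=p/q$ with $p,q$ positive coprime integers and $3\nmid p$. Let $\Delta_K=\{(\alpha,\beta)\in K^2:\ 1,\alpha,\beta \text{ linearly independent over }\mathbb{Q},\ \alpha,\beta>0,\ \alpha+\beta<1\}$ and $Ind=\{(i,j): i,j\in\{0,1,2\},\ i\neq j\}$. Let $\Delta=\{(x,y)\in\mathbb{R}^2: x,y\ge 0,\ x+y\le 1\}$ and $\triangle(1,2)=\{(x,y)\in\Delta: x\ge y\}$, $\triangle(2,1)=\{x\le y\}$, $\triangle(0,1)=\{2x+y-1\le 0\}$, $\triangle(1,0)=\{2x+y-1\ge 0\}$, $\triangle(0,2)=\{x+2y-1\le0\}$, $\triangle(2,0)=\{x+2y-1\ge 0\}$ (all subsets of $\Delta$). Maps $T_{(i,j)}:\triangle(i,j)\to\Delta$: $T_{(1,2)}(x,y)=(\frac{x-y}{1-y},\frac{y}{1-y})$, $T_{(2,1)}(x,y)=(\frac{x}{1-x},\frac{y-x}{1-x})$, $T_{(0,1)}(x,y)=(\frac{x}{1-x},\frac{y}{1-x})$, $T_{(1,0)}(x,y)=(\frac{2x+y-1}{x+y},\frac{y}{x+y})$, $T_{(0,2)}(x,y)=(\frac{x}{1-y},\frac{y}{1-y})$, $T_{(2,0)}(x,y)=(\frac{x}{x+y},\frac{x+2y-1}{x+y})$. For $(\alpha,\beta)\in\Delta_K$ put $\gamma=1-\alpha-\beta$ and $v_{\{1,2\}}=\frac{\alpha^r\beta^r}{|N(\alpha)N(\beta)|}$,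 $v_{\{0,1\}}=\frac{\alpha^r\gamma^r}{|N(\alpha)N(\gamma)|}$, $v_{\{0,2\}}=\frac{\beta^r\gamma^r}{|N(\beta)N(\gamma)|}$; the maximum is attained at a unique pair $\{i_0,j_0\}$. $\varepsilon(\alpha,\beta)$ is the ordered pair $(i,j)\in Ind$ with $\{i,j\}=\{i_0,j_0\}$ and $(\alpha,\beta)\in\triangle(i,j)$, and $T(\alpha,\beta)=T_{\varepsilon(\alpha,\beta)}(\alpha,\beta)$ (a map $\Delta_K\to\Delta_K$). For $(i,j)\in Ind$, $M_{(i,j)}=(m_{k\ell})_{0\le k,\ell\le2}$ with $m_{k\ell}=1$ if $k=\ell$ or $(k,\ell)=(i,j)$, and $0$ otherwise; $L_{(i,j)}:=M_{(j,i)}$. For $(\alpha,\beta)\in\Delta_K$, $\bar{\bar\nu}(\alpha,\beta)={}^t(1-\alpha-\beta,\alpha,\beta)$. Let $\bar{\bar e}_0,\bar{\bar e}_1,\bar{\bar e}_2$ be the standard basis of $\mathbb{R}^3$. A unit square $(\bar{\bar x},i^* )$ ($\bar{\bar x}\in\mathbb{Z}^3$, $i\in\{0,1,2\}$) is the set $\{\bar{\bar x}+t\bar{\bar e}_j+u\bar{\bar e}_k: t,u\in[0,1]\}$ with $\{i,j,k\}=\{0,1,2\}$. For $\bar{\bar a}\in\mathbb{R}^3_{>0}$ with $\mathbb{Q}$-linearly independent coordinates, the stepped surfaces are $\mathscr S(\bar{\bar a})=\{(\bar{\bar x},i^* ): \bar{\bar x}\in\mathbb{Z}^3, i\in\{0,1,2\},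 \langle\bar{\bar x},\bar{\bar a}\rangle>0,\ \langle\bar{\bar x}-\bar{\bar e}_i,\bar{\bar a}\rangle\le0\}$ and $\mathscr S'(\bar{\bar a})=\{(\bar{\bar x},i^* ): \langle\bar{\bar x},\bar{\bar a}\rangle\ge0,\ \langle\bar{\bar x}-\bar{\bar e}_i,\bar{\bar a}\rangle<0\}$. A patch is a finite formal sum of distinct unit squares, identified with its set of squares; $\gamma\prec\delta$ means the set of squares of $\gamma$ is contained in that of $\delta$. For $(i,j)\in Ind$ the dual substitution $\Theta_{(i,j)}$ is defined on unit squares by $\Theta_{(i,j)}(\bar{\bar x},j^* )=(L_{(i,j)}^{-1}(\bar{\bar x}+\bar{\bar e}_i),i^* )+(L_{(i,j)}^{-1}\bar{\bar x},j^* )$ and $\Theta_{(i,j)}(\bar{\bar x},k^* )=(L_{(i,j)}^{-1}\bar{\bar x},k^* )$ for $k\neq j$, and extended additively to formal sums. *)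

(* Defs.v *)
From HB Require Import structures.
From mathcomp Require Import all_boot all_order all_algebra.
From mathcomp Require Import all_classical all_reals all_analysis.
Set Implicit Arguments. Unset Strict Implicit. Unset Printing Implicit Defensive.
Import Order.TTheory GRing.Theory Num.Theory.
Local Open Scope classical_set_scope.
Local Open Scope ring_scope.

Section Defs.
Variable R : realType.

(* The real cubic field K = Q(theta), theta a real root of an irreducible
   cubic over Q.  Elements of K are the reals a + b theta + c theta^2. *)
Definition inK (theta x : R) : Prop :=
  exists a b c : rat, x = ratr a + ratr b * theta + ratr c * theta ^+ 2.

(* N_{K/Q}(x) = det of the Q-linear map "multiplication by x" on K, in the
   Q-basis 1, theta, theta^2 (coordinates are unique since deg theta = 3). *)
Definition normK (theta x : R) : rat :=
  xget 0 [set d : rat | exists M : 'M[rat]_3,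
     (forall j : 'I_3, x * theta ^+ j = \sum_(i < 3) ratr (M i j) * theta ^+ i)
     /\ d = \det M].

Definition inDeltaK (theta : R) (ab : R * R) : Prop :=
  let: (a, b) := ab in
  [/\ inK theta a /\ inK theta b,
      (forall u v w : rat, ratr u + ratr v * a + ratr w * b = 0 ->
         [/\ u = 0, v = 0 & w = 0]),
      0 < a, 0 < b & a + b < 1].

(* Ind = {(i,j) : i <> j} in {0,1,2} *)
Inductive Ind := I12 | I21 | I01 | I10 | I02 | I20.

Definition indi (e : Ind) : 'I_3 :=
  match e with I12 => inord 1 | I21 => inord 2 | I01 => inord 0
             | I10 => inord 1 | I02 => inord 0 | I20 => inord 2 end.
Definition indj (e : Ind) : 'I_3 :=
  match e with I12 => inord 2 | I21 => inord 1 | I01 => inord 1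
             | I10 => inord 0 | I02 => inord 2 | I20 => inord 0 end.

Definition inDelta (x y : R) : bool := [&& 0 <= x, 0 <= y & x + y <= 1].
Definition tri (e : Ind) (x y : R) : bool :=
  inDelta x y &&
  match e with
  | I12 => y <= x | I21 => x <= y
  | I01 => 2 * x + y - 1 <= 0 | I10 => 0 <= 2 * x + y - 1
  | I02 => x + 2 * y - 1 <= 0 | I20 => 0 <= x + 2 * y - 1 end.

Definition Tij (e : Ind) (xy : R * R) : R * R :=
  let: (x, y) := xy in
  match e with
  | I12 => ((x - y) / (1 - y), y / (1 - y))
  | I21 => (x / (1 - x), (y - x) / (1 - x))
  | I01 => (x / (1 - x), y / (1 - x))
  | I10 => ((2 * x + y - 1) / (x + y), y / (x + y))
  | I02 => (x / (1 - y), y / (1 - y))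
  | I20 => (x / (x + y), (x + 2 * y - 1) / (x + y)) end.

Definition vv (theta r a b : R) : R :=
  (a `^ r * b `^ r) / (`|ratr (normK theta a)| * `|ratr (normK theta b)|).

(* epsilon(alpha,beta): the unordered pair {i0,j0} maximizing v (unique on
   Delta_K; ties are broken arbitrarily here), then oriented by the triangle
   containing (alpha,beta). *)
Definition epsf (theta r : R) (ab : R * R) : Ind :=
  let: (a, b) := ab in
  let c := 1 - a - b in
  let v12 := vv theta r a b in
  let v01 := vv theta r a c in
  let v02 := vv theta r b c in
  if (v01 <= v12) && (v02 <= v12) then (if tri I12 a b then I12 else I21)
  else if v02 <= v01 then (if tri I01 a b then I01 else I10)
  else (if tri I02 a b then I02 else I20).

Definition Tmap (theta r : R) (ab : R * R) : R * R := Tij (epsf theta r ab) ab.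

Definition nu (a b : R) : 'cV[R]_3 :=
  \col_(k < 3) (if val k == 0%N then 1 - a - b else if val k == 1%N then a else b).

End Defs.

Definition ee (i : 'I_3) : 'cV[int]_3 := delta_mx i 0.

Definition Mij (i j : 'I_3) : 'M[int]_3 :=
  \matrix_(k < 3, l < 3) (if (k == l) || ((k == i) && (l == j)) then 1 else 0).
Definition Lmat (e : Ind) : 'M[int]_3 := Mij (indj e) (indi e).

Definition square := ('cV[int]_3 * 'I_3)%type.
Definition patch := set square.

Definition ipr {R : realType} (x : 'cV[int]_3) (a : 'cV[R]_3) : R :=
  \sum_(k < 3) (x k 0)%:~R * a k 0.

Definition stepped {R : realType} (a : 'cV[R]_3) : patch :=
  [set s | 0 < ipr s.1 a /\ ipr (s.1 - ee s.2) a <= 0].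
Definition stepped' {R : realType} (a : 'cV[R]_3) : patch :=
  [set s | 0 <= ipr s.1 a /\ ipr (s.1 - ee s.2) a < 0].

Definition ThetaSq (e : Ind) (s : square) : patch :=
  let: (x, k) := s in
  let Li := invmx (Lmat e) in
  if k == indj e then [set (Li *m (x + ee (indi e)), indi e); (Li *m x, indj e)]
  else [set (Li *m x, k)].

Definition Theta (e : Ind) (P : patch) : patch := \bigcup_(s in P) ThetaSq e s.

(* thetas eps n P = Theta_{eps 0} ( ... (Theta_{eps (n-1)} P)) *)
Fixpoint thetas (eps : nat -> Ind) (n : nat) (P : patch) : patch :=
  match n with
  | 0 => P
  | n'.+1 => thetas eps n' (Theta (eps n') P)
  end.

Definition Upatch : patch := [set (ee i, i) | i in [set: 'I_3]].
Definition U'patch : patch := [set ((0 : 'cV[int]_3), i) | i in [set: 'I_3]].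

(* Main.v *)
Require Import Defs.
From HB Require Import structures.
From mathcomp Require Import all_boot all_order all_algebra.
From mathcomp Require Import all_classical all_reals all_analysis.
From mathcomp Require Import ring lra.
Import Order.TTheory GRing.Theory Num.Theory.
Local Open Scope classical_set_scope.
Local Open Scope ring_scope.
Lemma ij_neq e : indi e != indj e.
Proof. by case: e; apply/negP => /eqP/(congr1 val); rewrite /= !inordK. Qed.

Lemma Lmat_E e : Lmat e = 1%:M + delta_mx (indj e) (indi e).
Proof.
apply/matrixP => k l; rewrite !mxE.
have [->|nkl] := eqVneq k l; rewrite /=.
  have [->|//] := eqVneq l (indj e); rewrite eq_sym (negbTE (ij_neq e)).
  by rewrite addr0.
by case: ifP; rewrite add0r.
Qed.

Lemma Linv_E e : invmx (Lmat e) = 1%:M - delta_mx (indj e) (indi e).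
Proof.
have H : Lmat e *m (1%:M - delta_mx (indj e) (indi e)) = 1%:M.
  rewrite Lmat_E mulmxBr !mulmxDl !mul1mx mulmx1 mul_delta_mx_cond.
  by rewrite (negbTE (ij_neq e)) mulr0n addr0 addrK.
have [U _] := mulmx1_unit H.
by rewrite -[RHS](mulKmx U) H mulmx1.
Qed.

Lemma Linv_mul e (x : 'cV[int]_3) :
  invmx (Lmat e) *m x = x - x (indi e) 0 *: ee (indj e).
Proof.
rewrite Linv_E mulmxBl mul1mx; congr (_ - _).
apply/matrixP => k l; rewrite !mxE (bigD1 (indi e)) //= big1 ?addr0.
  by rewrite !mxE eqxx ord1 /= andbT mulrC.
by move=> m /negbTE; rewrite !mxE => ->; rewrite andbF mul0r.
Qed.

Section Ipr.
Variable R : realType.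
Implicit Types (a : 'cV[R]_3) (x y : 'cV[int]_3).

Lemma ipr_add x y a : ipr (x + y) a = ipr x a + ipr y a.
Proof. by rewrite /ipr -big_split; apply: eq_bigr => k _; rewrite mxE intrD mulrDl. Qed.
Lemma ipr_opp x a : ipr (- x) a = - ipr x a.
Proof. by rewrite /ipr -sumrN; apply: eq_bigr => k _; rewrite mxE intrN mulNr. Qed.
Lemma ipr_sub x y a : ipr (x - y) a = ipr x a - ipr y a.
Proof. by rewrite ipr_add ipr_opp. Qed.
Lemma ipr_see (c : int) k a : ipr (c *: ee k) a = c%:~R * a k 0.
Proof.
rewrite /ipr (bigD1 k) //= big1 ?addr0.
  by rewrite !mxE eqxx /= mulr1.
by move=> m /negbTE; rewrite !mxE => ->; rewrite /= mulr0 mul0r.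
Qed.
Lemma ipr_ee k a : ipr (ee k) a = a k 0.
Proof. by rewrite -[ee k]scale1r ipr_see mul1r. Qed.
Lemma ipr0 a : ipr 0 a = 0.
Proof. by rewrite /ipr big1 // => k _; rewrite mxE mul0r. Qed.

Lemma ipr_rel x a a' (lam : R) (i j : 'I_3) :
  (forall k, a k 0 = lam * (a' k 0 + (k == i)%:R * a' j 0)) ->
  ipr x a = lam * (ipr x a' + (x i 0)%:~R * a' j 0).
Proof.
move=> H; rewrite /ipr.
rewrite (eq_bigr (fun k => lam * ((x k 0)%:~R * a' k 0) +
   lam * ((k == i)%:R * ((x k 0)%:~R * a' j 0)))); last first.
  by move=> k _; rewrite H; ring.
rewrite big_split /= -!mulr_sumr -mulrDr; congr (_ * (_ + _)).
rewrite (bigD1 i) //= big1 ?addr0; first by rewrite eqxx mul1r.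
by move=> m /negbTE ->; rewrite mul0r.
Qed.

End Ipr.

Definition stp {R : realType} (Q : R -> R -> Prop) (a : 'cV[R]_3) : set square :=
  [set s | Q (ipr s.1 a) (ipr (s.1 - ee s.2) a)].

Lemma Theta_stp (R : realType) (Q : R -> R -> Prop) e (a a' : 'cV[R]_3) (lam : R) :
  0 < lam ->
  (forall k, a k 0 = lam * (a' k 0 + (k == indi e)%:R * a' (indj e) 0)) ->
  (forall k, 0 <= a' k 0) ->
  (forall c u v, 0 < c -> Q u v -> Q (c * u) (c * v)) ->
  (forall u v u' v', u <= u' -> v' <= v -> Q u v -> Q u' v') ->
  Theta e (stp Q a') `<=` stp Q a.
Proof.
move=> lam0 Hrel Hpos HQ1 HQ2 t [[x k] /= Hx]; rewrite /ThetaSq.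
have ne := ij_neq e.
have Hli y : ipr (invmx (Lmat e) *m y) a = lam * ipr y a'.
  rewrite Linv_mul ipr_sub ipr_see (@ipr_rel R y _ _ _ _ _ Hrel) Hrel.
  rewrite eq_sym (negbTE ne) mul0r addr0; ring.
have Hek k' : ipr (ee k') a = lam * (a' k' 0 + (k' == indi e)%:R * a' (indj e) 0).
  by rewrite ipr_ee Hrel.
have Hek' k' : ipr (ee k') a' = a' k' 0 by rewrite ipr_ee.
have Hb (b : bool) : 0 <= (b%:R : R) by case: b.
have Hj := Hpos (indj e); have Hi := Hpos (indi e).
case: eqP => [Ekj|Nkj].
  case=> ->; rewrite /stp /=.
    rewrite ipr_sub Hli Hek ipr_add eqxx Hek'.
    apply: (HQ2 (lam * ipr x a') (lam * ipr (x - ee k) a')); last exact: HQ1.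
      by rewrite mulrDr lerDl; apply: mulr_ge0 => //; apply: ltW.
    by rewrite ipr_sub Ekj Hek' mul1r; nra.
  rewrite ipr_sub Hli Hek eq_sym (negbTE ne) mul0r addr0.
  by rewrite -Ekj -mulrBr -Hek' -ipr_sub; apply: HQ1.
move=> ->; rewrite /stp /= ipr_sub Hli Hek.
apply: (HQ2 (lam * ipr x a') (lam * ipr (x - ee k) a')) => //; last exact: HQ1.
rewrite ipr_sub Hek'.
move: (Hb (k == indi e)) => Hc; have := mulr_ge0 (mulr_ge0 (ltW lam0) Hc) Hj; nra.
Qed.

Lemma eeE k i : ee k i 0 = (i == k)%:R.
Proof. by rewrite /ee mxE andbT. Qed.

Lemma Li_ee e k : invmx (Lmat e) *m ee k =
  if k == indi e then ee k - ee (indj e) else ee k.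
Proof.
rewrite Linv_mul eeE eq_sym; case: eqP => _; first by rewrite scale1r.
by rewrite scale0r subr0.
Qed.

Lemma Li_eji e : invmx (Lmat e) *m (ee (indj e) + ee (indi e)) = ee (indi e).
Proof.
rewrite Linv_mul mxE !eeE eqxx (negbTE (ij_neq e)) add0r scale1r.
by rewrite addrC addKr.
Qed.

Lemma Li_0 e : invmx (Lmat e) *m (0 : 'cV[int]_3) = 0.
Proof. by rewrite mulmx0. Qed.

Lemma Theta_mono e (A B : set square) : A `<=` B -> Theta e A `<=` Theta e B.
Proof. by move=> AB t [s As Ht]; exists s => //; apply: AB. Qed.

Lemma Theta_U e (A B : set square) : Theta e (A `|` B) `<=` Theta e A `|` Theta e B.
Proof. by move=> t [s [As|Bs] Ht]; [left|right]; exists s. Qed.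



Lemma thetas_mono eps n (A B : set square) : A `<=` B -> thetas eps n A `<=` thetas eps n B.
Proof.
elim: n A B => [|n IH] A B AB //=.
by apply: IH; apply: Theta_mono.
Qed.

Lemma thetas_U eps n (A B : set square) :
  thetas eps n (A `|` B) `<=` thetas eps n A `|` thetas eps n B.
Proof.
elim: n A B => [|n IH] A B //=.
by move=> t /(thetas_mono _ _ _ _ (Theta_U (eps n) A B))/IH.
Qed.

Lemma thetas_sub eps (A : nat -> set square) :
  (forall k, Theta (eps k) (A k.+1) `<=` A k) ->
  forall n P, P `<=` A n -> thetas eps n P `<=` A 0%N.
Proof.
move=> HA; elim=> [|n IH] P PA //=.
apply: IH; apply: subset_trans (HA n); exact: Theta_mono.
Qed.

Lemma U_Theta e : Upatch `<=` Theta e Upatch.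
Proof.
move=> t [k _ <-].
have [Ekj|Nkj] := eqVneq k (indj e).
  exists (ee (indj e), indj e); first by exists (indj e).
  by rewrite /ThetaSq eqxx Li_ee eq_sym (negbTE (ij_neq e)) Ekj; right.
have [Eki|Nki] := eqVneq k (indi e).
  exists (ee (indj e), indj e); first by exists (indj e).
  by rewrite /ThetaSq eqxx Li_eji Eki; left.
exists (ee k, k); first by exists k.
by rewrite /ThetaSq (negbTE Nkj) Li_ee (negbTE Nki).
Qed.

Lemma U'_Theta e : U'patch `<=` Theta e U'patch.
Proof.
move=> t [k _ <-]; exists (0, k); first by exists k.
rewrite /ThetaSq Li_0; case: eqP => [->|_] //; by right.
Qed.

Lemma ThetaU_sub e : Theta e Upatch `<=` Upatch `|` Theta e U'patch.
Proof.
move=> t [_ [k _ <-]]; rewrite /ThetaSq.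
case: eqP => [->|Nkj].
  by case=> ->; left; [exists (indi e) | exists (indj e)];
    rewrite // ?Li_eji // Li_ee eq_sym (negbTE (ij_neq e)).
move=> ->; rewrite Li_ee; case: eqP => [->|_]; last by left; exists k.
right; exists (0, indj e); first by exists (indj e).
by rewrite /ThetaSq eqxx add0r Li_ee eqxx; left.
Qed.

Lemma ThetaU'_sub e : Theta e U'patch `<=` U'patch `|` Theta e Upatch.
Proof.
move=> t [_ [k _ <-]]; rewrite /ThetaSq.
case: (k =P indj e) => [_|Nkj]; last by move=> ->; left; exists k; rewrite ?Li_0.
case=> ->; last by left; exists (indj e); rewrite ?Li_0.
right; exists (ee (indi e), indi e); first by exists (indi e).
by rewrite /ThetaSq (negbTE (ij_neq e)) add0r !Li_ee eqxx.
Qed.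
Definition indep {R : realType} (a b : R) :=
  forall u v w : rat, ratr u + ratr v * a + ratr w * b = 0 -> [/\ u = 0, v = 0 & w = 0].

Lemma all_I3 (P : 'I_3 -> Prop) : P (inord 0) -> P (inord 1) -> P (inord 2) -> forall k, P k.
Proof.
move=> H0 H1 H2 k; have -> : k = inord k by rewrite inord_val.
by case: k => [[|[|[|m]]] Hm] //=.
Qed.

Lemma inord_eqE m n : (m < 3)%N -> (n < 3)%N -> (inord m == inord n :> 'I_3) = (m == n).
Proof.
move=> Hm Hn; apply/eqP/eqP => [/(congr1 val)|->//].
by rewrite /= !inordK.
Qed.

Lemma nu_E (R : realType) (a b : R) :
  [/\ nu a b (inord 0) 0 = 1 - a - b, nu a b (inord 1) 0 = a & nu a b (inord 2) 0 = b].
Proof. rewrite !mxE; split; rewrite -[\val _]/(nat_of_ord _) inordK //. Qed.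
Arguments nu_E {R}.

Definition rm := (rmorphB, rmorphD, rmorphN, rmorph1, rmorph0).

Lemma step_case (R : realType) (a b : R) e :
  0 < a -> 0 < b -> a + b < 1 -> indep a b -> tri e a b ->
  let ab' := Tij e (a,b) in
  [/\ 0 < 1 - nu a b (indj e) 0,
      (forall k, nu a b k 0 = (1 - nu a b (indj e) 0) *
         (nu ab'.1 ab'.2 k 0 + (k == indi e)%:R * nu ab'.1 ab'.2 (indj e) 0)),
      nu a b (indj e) 0 < nu a b (indi e) 0 & indep ab'.1 ab'.2].
Proof.
move=> a0 b0 ab1 ind.
have [n0 n1 n2] := nu_E a b.
have [n0' n1' n2'] := nu_E (Tij e (a,b)).1 (Tij e (a,b)).2.
case: e n0' n1' n2' => /= n0' n1' n2' /andP[_ Ht]; rewrite /= ?n0 ?n1 ?n2.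
- split.
  + lra.
  + apply: all_I3; rewrite ?n0 ?n1 ?n2 ?n0' ?n1' ?n2' ?inord_eqE //=; field; lra.
  + case: ltrgtP => // H; first lra.
    have E : ratr (0 : rat) + ratr (1 : rat) * a + ratr (-1 : rat) * b = 0 :> R by rewrite !rm; lra.
    case: (ind _ _ _ E) => *; have /eqP : (1 : rat) = 0 by lra.
    by rewrite oner_eq0.
  + move=> u v w E.
    have E' : ratr (u) + ratr (v) * a + ratr (w - u - v) * b = 0.
      rewrite -[RHS](mulr0 (1 - b)) -E !rm ?rmorphM; field; lra.
    by case: (ind _ _ _ E') => *; split; lra.
- split.
  + lra.
  + apply: all_I3; rewrite ?n0 ?n1 ?n2 ?n0' ?n1' ?n2' ?inord_eqE //=; field; lra.
  + case: ltrgtP => // H; first lra.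
    have E : ratr (0 : rat) + ratr (1 : rat) * a + ratr (-1 : rat) * b = 0 :> R by rewrite !rm; lra.
    case: (ind _ _ _ E) => *; have /eqP : (1 : rat) = 0 by lra.
    by rewrite oner_eq0.
  + move=> u v w E.
    have E' : ratr (u) + ratr (v - u - w) * a + ratr (w) * b = 0.
      rewrite -[RHS](mulr0 (1 - a)) -E !rm ?rmorphM; field; lra.
    by case: (ind _ _ _ E') => *; split; lra.
- split.
  + lra.
  + apply: all_I3; rewrite ?n0 ?n1 ?n2 ?n0' ?n1' ?n2' ?inord_eqE //=; field; lra.
  + case: ltrgtP => // H; first lra.
    have E : ratr (-1 : rat) + ratr (1 + 1 : rat) * a + ratr (1 : rat) * b = 0 :> R by rewrite !rm; lra.
    case: (ind _ _ _ E) => *; have /eqP : (1 : rat) = 0 by lra.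
    by rewrite oner_eq0.
  + move=> u v w E.
    have E' : ratr (u) + ratr (v - u) * a + ratr (w) * b = 0.
      rewrite -[RHS](mulr0 (1 - a)) -E !rm ?rmorphM; field; lra.
    by case: (ind _ _ _ E') => *; split; lra.
- split.
  + lra.
  + apply: all_I3; rewrite ?n0 ?n1 ?n2 ?n0' ?n1' ?n2' ?inord_eqE //=; field; lra.
  + case: ltrgtP => // H; first lra.
    have E : ratr (-1 : rat) + ratr (1 + 1 : rat) * a + ratr (1 : rat) * b = 0 :> R by rewrite !rm; lra.
    case: (ind _ _ _ E) => *; have /eqP : (1 : rat) = 0 by lra.
    by rewrite oner_eq0.
  + move=> u v w E.
    have E' : ratr (- v) + ratr (u + (1 + 1) * v) * a + ratr (u + v + w) * b = 0.
      rewrite -[RHS](mulr0 (a + b)) -E !rm ?rmorphM; field; lra.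
    by case: (ind _ _ _ E') => *; split; lra.
- split.
  + lra.
  + apply: all_I3; rewrite ?n0 ?n1 ?n2 ?n0' ?n1' ?n2' ?inord_eqE //=; field; lra.
  + case: ltrgtP => // H; first lra.
    have E : ratr (-1 : rat) + ratr (1 : rat) * a + ratr (1 + 1 : rat) * b = 0 :> R by rewrite !rm; lra.
    case: (ind _ _ _ E) => *; have /eqP : (1 : rat) = 0 by lra.
    by rewrite oner_eq0.
  + move=> u v w E.
    have E' : ratr (u) + ratr (v) * a + ratr (w - u) * b = 0.
      rewrite -[RHS](mulr0 (1 - b)) -E !rm ?rmorphM; field; lra.
    by case: (ind _ _ _ E') => *; split; lra.
- split.
  + lra.
  + apply: all_I3; rewrite ?n0 ?n1 ?n2 ?n0' ?n1' ?n2' ?inord_eqE //=; field; lra.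
  + case: ltrgtP => // H; first lra.
    have E : ratr (-1 : rat) + ratr (1 : rat) * a + ratr (1 + 1 : rat) * b = 0 :> R by rewrite !rm; lra.
    case: (ind _ _ _ E) => *; have /eqP : (1 : rat) = 0 by lra.
    by rewrite oner_eq0.
  + move=> u v w E.
    have E' : ratr (- w) + ratr (u + v + w) * a + ratr (u + (1 + 1) * w) * b = 0.
      rewrite -[RHS](mulr0 (a + b)) -E !rm ?rmorphM; field; lra.
    by case: (ind _ _ _ E') => *; split; lra.
Qed.

Definition good {R : realType} (p : R * R) :=
  [/\ 0 < p.1, 0 < p.2, p.1 + p.2 < 1 & indep p.1 p.2].

Lemma nu_pos (R : realType) (a b : R) : 0 < a -> 0 < b -> a + b < 1 ->
  forall k, 0 < nu a b k 0.
Proof. move=> *; have [n0 n1 n2] := nu_E a b; apply: (all_I3 (fun k => 0 < nu a b k 0)); rewrite ?n0 ?n1 ?n2; lra. Qed.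

Lemma tri_pair (R : realType) (a b : R) e1 e2 : (~~ tri e1 a b -> tri e2 a b) ->
  tri (if tri e1 a b then e1 else e2) a b.
Proof. by move=> H; case: ifP => // /negbT /H. Qed.

Lemma tri_epsf (R : realType) theta r (a b : R) : 0 < a -> 0 < b -> a + b < 1 ->
  tri (epsf theta r (a, b)) a b.
Proof.
move=> a0 b0 ab1.
have hD : inDelta a b by rewrite /inDelta; apply/and3P; split; lra.
rewrite /epsf; case: ifP => _; [|case: ifP => _]; apply: tri_pair;
  rewrite /tri hD /= -ltNge => H; lra.
Qed.

Lemma good_step (R : realType) (p : R * R) e : good p -> tri e p.1 p.2 ->
  good (Tij e p) /\
  exists2 lam : R, 0 < lam & forall k, nu p.1 p.2 k 0 = lam *
         (nu (Tij e p).1 (Tij e p).2 k 0 + (k == indi e)%:R * nu (Tij e p).1 (Tij e p).2 (indj e) 0).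
Proof.
case: p => a b [/= a0 b0 ab1 ind] Ht.
have [lam0 Hrel Hlt ind'] := @step_case R a b e a0 b0 ab1 ind Ht.
move: ind' Hrel; set p' := Tij e (a, b) => ind' Hrel.
split; last by exists (1 - nu a b (indj e) 0).
have Hp := @nu_pos R a b a0 b0 ab1.
have Hn' : forall k, 0 < nu p'.1 p'.2 k 0.
  move=> k; have Hk := Hrel k; have Hj := Hrel (indj e).
  move: Hj; rewrite eq_sym (negbTE (ij_neq e)) mul0r addr0 => Hj.
  have [Eki|Nki] := eqVneq k (indi e).
    move: Hk; rewrite Eki eqxx mul1r => Hk.
    have : 0 < (1 - nu a b (indj e) 0) * nu p'.1 p'.2 (indi e) 0 by nra.
    by rewrite pmulr_rgt0.
  move: Hk; rewrite (negbTE Nki) mul0r addr0 => Hk.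
  have := Hp k; rewrite Hk pmulr_rgt0 //.
have [n0 n1 n2] := nu_E p'.1 p'.2.
have := Hn' (inord 0); have := Hn' (inord 1); have := Hn' (inord 2).
rewrite n0 n1 n2 => h2 h1 h0; split => //; lra.
Qed.
Theorem corollary5p8 (R : realType) (Pmin : {poly rat}) (theta : R)
  (p q : nat) (alpha0 beta0 : R) :
  size Pmin = 4%N -> irreducible_poly Pmin -> root (map_poly ratr Pmin) theta ->
  (0 < p)%N -> (0 < q)%N -> coprime p q -> ~~ (3 %| p)%N ->
  inDeltaK theta (alpha0, beta0) ->
  let r : R := p%:R / q%:R in
  let orb := fun n : nat => iter n (Tmap theta r) (alpha0, beta0) in
  let eps := fun n : nat => epsf theta r (orb n) in
  let gam := fun n : nat => thetas eps n Upatch in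
  let gam' := fun n : nat => thetas eps n U'patch in
  [/\ (forall n : nat, gam n `\` gam' n = Upatch /\ gam' n `\` gam n = U'patch),
      (forall n : nat, gam n `<=` gam n.+1)
    & \bigcup_(n in [set: nat]) gam n `<=` stepped (nu alpha0 beta0)].

Proof.
move=> _ _ _ _ _ _ _ [_ Hind a0 b0 ab1] r orb eps gam gam'.
have orbS n : orb n.+1 = Tij (eps n) (orb n) by [].
have Htri n : good (orb n) -> tri (eps n) (orb n).1 (orb n).2.
  by rewrite /eps; case: (orb n) => a b [/= ? ? ? _]; apply: tri_epsf.
have Hgood n : good (orb n).
  elim: n => [|n IH]; first by split.
  by rewrite orbS; exact: (@good_step R _ _ IH (Htri n IH)).1.
have Hpos n k : 0 < nu (orb n).1 (orb n).2 k 0.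
  by case: (Hgood n) => *; apply: nu_pos.
pose A n := stepped (nu (orb n).1 (orb n).2).
pose A' n := stepped' (nu (orb n).1 (orb n).2).
have HA k : Theta (eps k) (A k.+1) `<=` A k.
  have [_ [lam l0 Hrel]] := @good_step R _ _ (Hgood k) (Htri k (Hgood k)).
  rewrite /A orbS.
  apply: (@Theta_stp R (fun u v => 0 < u /\ v <= 0) (eps k) _ _ lam l0 Hrel).
  - by move=> m; apply: ltW; apply: (Hpos k.+1).
  - by move=> c u v c0 [h1 h2]; split; nra.
  - by move=> u v u' v' h1 h2 [h3 h4]; split; lra.
have HA' k : Theta (eps k) (A' k.+1) `<=` A' k.
  have [_ [lam l0 Hrel]] := @good_step R _ _ (Hgood k) (Htri k (Hgood k)).
  rewrite /A' orbS.
  apply: (@Theta_stp R (fun u v => 0 <= u /\ v < 0) (eps k) _ _ lam l0 Hrel).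
  - by move=> m; apply: ltW; apply: (Hpos k.+1).
  - by move=> c u v c0 [h1 h2]; split; nra.
  - by move=> u v u' v' h1 h2 [h3 h4]; split; lra.
have Upos n : Upatch `<=` A n.
  move=> s [i _ <-]; rewrite /A /stepped /=.
  by rewrite subrr ipr0 ipr_ee; split => //; apply: Hpos.
have U'pos n : U'patch `<=` A' n.
  move=> s [i _ <-]; rewrite /A' /stepped' /=.
  by rewrite sub0r ipr_opp ipr0 ipr_ee oppr_lt0; split => //; apply: Hpos.
have G3 n : gam n `<=` A 0%N := thetas_sub eps A HA n _ (Upos n).
have G3' n : gam' n `<=` A' 0%N := thetas_sub eps A' HA' n _ (U'pos n).
have G2 n : gam n `<=` gam n.+1 := thetas_mono eps n _ _ (U_Theta (eps n)).
have G2' n : gam' n `<=` gam' n.+1 := thetas_mono eps n _ _ (U'_Theta (eps n)).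
have UG n : Upatch `<=` gam n.
  by elim: n => [|n IH] //; apply: subset_trans IH (G2 n).
have UG' n : U'patch `<=` gam' n.
  by elim: n => [|n IH] //; apply: subset_trans IH (G2' n).
have disj1 s : Upatch s -> ~ A' 0%N s.
  by case=> i _ <-; rewrite /A' /stepped' /= subrr ipr0 ltxx => -[].
have disj2 s : U'patch s -> ~ A 0%N s.
  by case=> i _ <-; rewrite /A /stepped /= ipr0 ltxx => -[].
have D1 n : gam n `\` gam' n `<=` Upatch.
  elim: n => [|n IH] s [Hs Hs'] //.
  have := thetas_mono eps n _ _ (ThetaU_sub (eps n)) _ Hs.
  move/thetas_U => [H|H]; last by [].
  by apply: IH; split => // H'; apply: Hs'; apply: G2'.
have D2 n : gam' n `\` gam n `<=` U'patch.
  elim: n => [|n IH] s [Hs Hs'] //.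
  have := thetas_mono eps n _ _ (ThetaU'_sub (eps n)) _ Hs.
  move/thetas_U => [H|H]; last by [].
  by apply: IH; split => // H'; apply: Hs'; apply: G2.
split.
- move=> n; split; apply/seteqP; split => //.
  + by move=> s Hs; split; [apply: UG | move=> /G3'; apply: disj1].
  + by move=> s Hs; split; [apply: UG' | move=> /G3; apply: disj2].
- exact: G2.
- by move=> s [n _ Hs]; apply: (G3 n).
Qed.
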